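(* For every nonreal $z\in\mathbb C$ and every vertex $x_0$ with $\ell(x_0)\ge1$ there exists a function $v:\Gamma_{x_0}\to\mathbb C$, not identically zero, such that $(Jv)(x)=zv(x)$ for all $x\in\Gamma_{x_0}\setminus\{x_0\}$. Any such $v$ satisfies $v(x)\ne0$ for all $x\in\Gamma_{x_0}$, and it is unique up to a constant multiple.
   Context: Let $\Gamma$ be an infinite connected tree whose vertices are arranged in levels $\ell(x)\in\{0,1,2,\dots\}$: every vertex $x$ is adjacent to exactly one vertex $x'$ with $\ell(x')=\ell(x)+1$; for $\ell(x)\ge 1$ the set $N_x=\{y:\ y'=x\}$ of neighbours of $x$ on level $\ell(x)-1$ is finite and nonempty; $N_x=\emptyset$ if $\ell(x)=0$; there are no other edges. For $x\in\Gamma$, $\Gamma_x$ is the finite subtree consisting of $x$ and all its descendants. Fix $\lambda_x>0$, $\beta_x\in\mathbb R$. The Jacobi matrix $J$ acts on functions $v$ by $(Jv)(x)=\lambda_x v(x')+\beta_x v(x)+\sum_{y\in N_x}\lambda_y v(y)$. *)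

(* Defs.v *)
(* The complex field is abstracted as an arbitrary
   numClosedFieldType C (C = complex numbers is an instance). *)
From HB Require Import structures.
From mathcomp Require Import all_boot all_order all_algebra.
Set Implicit Arguments. Unset Strict Implicit. Unset Printing Implicit Defensive.
Import Order.TTheory GRing.Theory Num.Theory.
Local Open Scope ring_scope.

(* A leveled tree as in the paper: vertex type V, level function lvl,
   parent map par (x |-> x'), and children list ch x enumerating N_x. *)
Definition leveled_tree (V : eqType) (lvl : V -> nat) (par : V -> V)
  (ch : V -> seq V) : Prop :=
  [/\ (forall x, lvl (par x) = (lvl x).+1),
      (forall x y, (y \in ch x) = (par y == x)),
      (forall x, uniq (ch x)),
      (forall x, (ch x == [::]) = (lvl x == 0%N))
    &
      (forall x y, exists m n, iter m par x = iter n par y)].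

(* y belongs to Gamma_x (x itself or a descendant of x) *)
Definition in_subtree (V : eqType) (par : V -> V) (x y : V) : Prop :=
  exists n, iter n par y = x.

Definition Jop (V : eqType) (C : numClosedFieldType) (par : V -> V)
  (ch : V -> seq V) (lam beta : V -> C) (v : V -> C) (x : V) : C :=
  lam x * v (par x) + beta x * v x + \sum_(y <- ch x) lam y * v y.

Definition sub_solution (V : eqType) (C : numClosedFieldType) (par : V -> V)
  (ch : V -> seq V) (lam beta : V -> C) (z : C) (x0 : V) (v : V -> C) : Prop :=
  (exists x, in_subtree par x0 x /\ v x != 0) /\
  (forall x, in_subtree par x0 x -> x <> x0 -> Jop par ch lam beta v x = z * v x).

(* Main.v *)
Require Import Defs.
From HB Require Import structures.
From mathcomp Require Import all_boot all_order all_algebra.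
From mathcomp Require Import ring zify.
Import Order.TTheory GRing.Theory Num.Theory.
Local Open Scope ring_scope.

Fixpoint Fr (V : eqType) (C : numClosedFieldType) (ch : V -> seq V)
  (lam beta : V -> C) (z : C) (k : nat) (x : V) : C :=
  match k with
  | 0 => 1
  | k'.+1 => (z - beta x - \sum_(c <- ch x) lam c / Fr V C ch lam beta z k' c) / lam x
  end.
Arguments Fr {V C}.

Fixpoint gv (V : eqType) (C : numClosedFieldType) (par : V -> V) (f : V -> C)
  (k : nat) (y : V) : C :=
  match k with
  | 0 => 1
  | k'.+1 => gv V C par f k' (par y) / f y
  end.
Arguments gv {V C}.

Lemma Fr_pos (V : eqType) (C : numClosedFieldType) (ch : V -> seq V)
  (lam beta : V -> C) (z : C)
  (Hlam : forall x, 0 < lam x) (Hbeta : forall x, beta x \is Num.real)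
  (hz : z \isn't Num.real) k :
  (forall x, 0 <= 'Im z * 'Im (Fr ch lam beta z k x)) ->
  forall x, 0 < 'Im z * 'Im (Fr ch lam beta z k.+1 x).
Proof.
move=> IH x /=.
have Rl : (lam x)^-1 \is Num.real by rewrite rpredV gtr0_real.
rewrite ImMr // !raddfB /= (Creal_ImP _ (Hbeta x)) subr0 raddf_sum /=.
have -> : \sum_(c <- ch x) 'Im (lam c / Fr ch lam beta z k c)
   = \sum_(c <- ch x) lam c * 'Im ((Fr ch lam beta z k c)^-1).
  by apply: eq_bigr => c _; rewrite ImMl // gtr0_real.
rewrite mulrA mulrBr mulr_sumr divr_gt0 //.
have az : 'Im z != 0 by apply/eqP => /Creal_ImP; rewrite (negbTE hz).
have h1 : 0 < 'Im z * 'Im z.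
  by rewrite -expr2 -real_normK ?Creal_Im // exprn_gt0 // normr_gt0.
have h2 : \sum_(c <- ch x) 'Im z * (lam c * 'Im (Fr ch lam beta z k c)^-1) <= 0.
  rewrite -oppr_ge0 -sumrN; apply: sumr_ge0 => c _.
  rewrite ImV mulrCA mulrA -mulrN mulNr opprK mulrA.
  apply: mulr_ge0; last by rewrite invr_ge0 exprn_ge0.
  rewrite -mulrA; apply: mulr_ge0; [exact: ltW | exact: IH].
by rewrite subr_gt0 (le_lt_trans h2 h1).
Qed.

Theorem lemma3 (V : eqType) (lvl : V -> nat) (par : V -> V) (ch : V -> seq V)
  (C : numClosedFieldType) (lam beta : V -> C)
  (Htree : leveled_tree lvl par ch)
  (Hlam : forall x, 0 < lam x) (Hbeta : forall x, beta x \is Num.real)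
  (z : C) (hz : z \isn't Num.real) (x0 : V) (hx0 : (1 <= lvl x0)%N) :
  (exists v, sub_solution par ch lam beta z x0 v) /\
  (forall v, sub_solution par ch lam beta z x0 v ->
     (forall x, in_subtree par x0 x -> v x != 0) /\
     (forall w, sub_solution par ch lam beta z x0 w ->
        exists c : C, forall x, in_subtree par x0 x -> w x = c * v x)).
Proof.
case: Htree => Hlvl Hch _ Hleaf _.
have lamNZ x : lam x != 0 by rewrite gt_eqF.
pose f x := Fr ch lam beta z (lvl x).+1 x.
have fNZ x : f x != 0.
  have : 0 < 'Im z * 'Im (f x).
    apply: Fr_pos => //; elim: (lvl x) => [|k IHk] y.
      by rewrite /= (Creal_ImP _ (rpred1 _)) mulr0.
    by apply/ltW; apply: Fr_pos.
  by apply: contraTneq => ->; rewrite raddf0 mulr0 ltxx.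
have lvl_ch x c : c \in ch x -> lvl x = (lvl c).+1.
  by rewrite Hch => /eqP <-; rewrite Hlvl.
have fE x : lam x * f x = z - beta x - \sum_(c <- ch x) lam c / f c.
  rewrite /f /= mulrC divfK //; congr (_ - _).
  rewrite big_seq_cond [RHS]big_seq_cond; apply: eq_bigr => c /andP[cx _].
  by rewrite /f (lvl_ch _ _ cx).
have lvl_iter n y : lvl (iter n par y) = (lvl y + n)%N.
  by elim: n => [|n IH]; rewrite ?addn0 // iterS Hlvl IH addnS.
have sub_lvl y : in_subtree par x0 y -> (lvl y <= lvl x0)%N.
  by case=> n <-; rewrite lvl_iter leq_addr.
have sub_ch x c : in_subtree par x0 x -> c \in ch x -> in_subtree par x0 c /\ c <> x0.
  move=> [n hn] cx; split.
    by exists n.+1; rewrite iterSr; move: cx; rewrite Hch => /eqP ->.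
  move=> E; have := sub_lvl x (ex_intro _ n hn); rewrite (lvl_ch _ _ cx) E.
  by rewrite ltnn.
have ratio v : (forall x, in_subtree par x0 x -> x <> x0 ->
      Jop par ch lam beta v x = z * v x) ->
    forall x, in_subtree par x0 x -> x <> x0 -> v (par x) = f x * v x.
  move=> Hv; suff H : forall n x, (lvl x < n)%N -> in_subtree par x0 x -> x <> x0 ->
      v (par x) = f x * v x by move=> x; apply: (H (lvl x).+1).
  elim=> [//|n IH] x ltx sx nx.
  have := Hv x sx nx; rewrite /Jop => E.
  have S : \sum_(y <- ch x) lam y * v y = v x * \sum_(c <- ch x) lam c / f c.
    rewrite mulr_sumr big_seq [RHS]big_seq; apply: eq_bigr => c cx.
    have [sc nc] := sub_ch x c sx cx.
    have lc : (lvl c < n)%N by move: ltx; rewrite (lvl_ch _ _ cx).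
    have := IH c lc sc nc; move: cx; rewrite Hch => /eqP -> ->.
    by rewrite [RHS]mulrC mulrA divfK.
  apply: (mulfI (lamNZ x)); rewrite mulrA fE.
  move: E; rewrite S => E; rewrite !mulrBl -E; ring.
have notx0 n y : iter n.+1 par y = x0 -> y <> x0.
  move=> h E; have := lvl_iter n.+1 y; rewrite h E => /eqP.
  by rewrite -{1}(addn0 (lvl x0)) eqn_add2l.
have uniq v w c : sub_solution par ch lam beta z x0 v ->
    sub_solution par ch lam beta z x0 w -> w x0 = c * v x0 ->
    forall x, in_subtree par x0 x -> w x = c * v x.
  move=> [_ Hv] [_ Hw] h0 x [n]; elim: n x => [|n IH] x /=; first by move=> ->.
  move=> hx; have nx := notx0 _ _ hx.
  have sx : in_subtree par x0 x by exists n.+1.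
  have := IH (par x); rewrite -iterSr => /(_ hx).
  rewrite (ratio v Hv x sx nx) (ratio w Hw x sx nx) mulrCA.
  exact: mulfI.
split.
  pose v y := gv par f (lvl x0 - lvl y) y.
  have vr x : in_subtree par x0 x -> x <> x0 -> v (par x) = f x * v x.
    move=> [n hn] nx; case: n hn => [/= E|m hm]; first by [].
    have L := lvl_iter m.+1 x; rewrite hm in L.
    have e1 : (lvl x0 - lvl (par x) = m)%N by rewrite Hlvl L; lia.
    have e2 : (lvl x0 - lvl x = m.+1)%N by rewrite L; lia.
    by rewrite /v e1 e2 /= mulrC divfK.
  exists v; split.
    by exists x0; split; [exists 0%N | rewrite /v subnn /= oner_neq0].
  move=> x sx nx; rewrite /Jop (vr x sx nx).
  have S : \sum_(y <- ch x) lam y * v y = v x * \sum_(c <- ch x) lam c / f c.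
    rewrite mulr_sumr big_seq [RHS]big_seq; apply: eq_bigr => c cx.
    have [sc nc] := sub_ch x c sx cx.
    have := vr c sc nc; move: cx; rewrite Hch => /eqP -> ->.
    by rewrite [RHS]mulrC mulrA divfK.
  rewrite S mulrA fE; ring.
move=> v sv.
have sv' := sv; case: sv' => [[x1 [sx1 nx1]] Hv].
have v0 : v x0 != 0.
  apply: contra nx1 => /eqP h; apply/eqP.
  by rewrite (uniq v v 0 sv sv) ?mul0r // h mul0r.
split.
  move=> x [n hn]; apply: contra v0 => /eqP hx; apply/eqP.
  elim: n x hn hx => [|n IH] x /=; first by move=> ->.
  move=> hx h; have nx := notx0 _ _ hx.
  have sx : in_subtree par x0 x by exists n.+1.
  apply: (IH (par x)); first by rewrite -iterSr.
  by rewrite (ratio v Hv x sx nx) h mulr0.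
move=> w sw; exists (w x0 / v x0); apply: uniq => //.
by rewrite divfK.
Qed.
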